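(* Let $X,X_1$ be i.i.d. positive random variables with $\mathbb{E}X=1$, let $p\ge2$ be an integer and let $1<\alpha\le p+2$. Suppose $\mathbb{P}\{X\ge x\}=O(x^{-p-\alpha})$ as $x\to\infty$. Then, as $n\to\infty$, $$\mathbb{E}\frac{X_1^{2p}}{\left(\frac1nX_1+1\right)^{p+1}}=O(n^{p-\alpha+2})$$ and $$\mathbb{E}\frac{X_1^{2p}}{\left(\frac1nX_1+1\right)^{p+1}}X_1^2=O(n^{p-\alpha+2}\log n).$$ *)

(* Defs.v *)
From HB Require Import structures.
From mathcomp Require Import all_boot all_order all_algebra.
From mathcomp Require Import all_classical all_reals all_analysis.

(* Main.v *)
Require Import Defs.
From HB Require Import structures.
From mathcomp Require Import all_boot all_order all_algebra.
From mathcomp Require Import all_classical all_reals all_analysis.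
From mathcomp Require Import measurable_realfun.
From mathcomp Require Import ring lra.
Import numFieldNormedType.Exports.
Import Order.TTheory GRing.Theory Num.Theory.
Local Open Scope classical_set_scope.
Local Open Scope ring_scope.
Lemma mG (R : realType) (a b : nat) (c : R) : 0 <= c ->
  measurable_fun setT (fun y : R => y ^+ b / (`|y| * c + 1) ^+ a).
Proof.
move=> c0; apply: continuous_measurable_fun.
have h1 : continuous (fun y : R => `|y| * c + 1).
  move=> x; apply: cvgD; last exact: cvg_cst.
  apply: cvgMl; exact: norm_continuous.
have h2 : continuous (fun y : R => (`|y| * c + 1) ^+ a).
  move=> x; exact: (@continuous_comp R R R _ (fun y : R => y ^+ a) x (h1 x) (@exprn_continuous R a _)).
have h3 : continuous (fun y : R => ((`|y| * c + 1) ^+ a)^-1).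
  move=> x; apply: cvgV; last exact: h2.
  by rewrite expf_neq0 // gt_eqF // ltr_pwDr // mulr_ge0.
move=> x; apply: cvgM; [exact: exprn_continuous | exact: h3].
Qed.
Lemma exists_dyadic (R : realType) (x : R) (K : nat) : 2 ^+ K <= x ->
  exists j : nat, [/\ (K <= j)%N, 2 ^+ j <= x & x < 2 ^+ j.+1].
Proof.
move=> Kx.
have ex : exists m : nat, x < 2 ^+ m.
  exists (Num.truncn x); apply: (lt_le_trans (truncnS_gt x)).
  rewrite -natrX ler_nat; exact: ltn_expl.
case: (ex_minnP ex) => m xm mmin.
have m0 : (K < m)%N.
  rewrite ltnNge; apply/negP => mK.
  have h : (2:R) ^+ m <= 2 ^+ K by rewrite ler_eXn2l // ltr1n.
  by have := le_trans h Kx; rewrite leNgt xm.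
case: m xm mmin m0 => // j xj jmin Kj.
exists j; split => //.
rewrite leNgt; apply/negP => /jmin; by rewrite ltnn.
Qed.
Lemma core d (T : measurableType d) (R : realType) (P : probability T R)
  (X : T -> R) (mX : measurable_fun setT X) (Xpos : forall w, 0 < X w)
  (h : R -> R) (mh : measurable_fun setT (fun w => h (X w)))
  (hmono : forall x y, 0 < x -> x <= y -> h x <= h y)
  (h0 : forall x, 0 < x -> 0 <= h x)
  (K : nat) (D r : R) (D0 : 0 <= D) (r0 : 0 < r) (r1 : r < 1)
  (hk : forall k, (K <= k)%N ->
     ((h (2 ^+ k.+1))%:E * P [set w | (2 ^+ k <= X w)%R] <= (D * r ^+ k)%:E)%E) :
  (\int[P]_w (h (X w))%:E <= (h (2 ^+ K) + D / (1 - r))%:E)%E.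
Proof.
pose A k := [set w | (2:R) ^+ k <= X w].
have mA k : measurable (A k).
  have -> : A k = X @^-1` `[(2:R) ^+ k, +oo[%classic.
    by apply/seteqP; split => w /=; rewrite in_itv /= andbT.
  by rewrite -[X @^-1` _]setTI; apply: mX => //; exact: measurable_itv.
pose a k := if (K <= k)%N then h (2 ^+ k.+1) else 0.
have a0 k : 0 <= a k.
  by rewrite /a; case: ifP => // _; apply: h0; apply: exprn_gt0.
pose u k w := ((a k)%:E * (\1_(A k) w)%:E)%E.
have u0 k w : (0 <= u k w)%E.
  by rewrite /u mule_ge0 // lee_fin.
have mu k : measurable_fun setT (u k).
  apply: emeasurable_funM; first exact: measurable_cst.
  by apply/measurable_EFinP; apply: measurable_indic.
have hK0 : 0 <= h (2 ^+ K) by apply: h0; apply: exprn_gt0.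
have pw w : ((h (X w))%:E <= (h (2 ^+ K))%:E + \sum_(k <oo) u k w)%E.
  have [xK|Kx] := ltP (X w) (2 ^+ K).
    apply: lee_paddr; first exact: nneseries_ge0.
    by rewrite lee_fin; apply: hmono => //; exact: ltW.
  apply: lee_paddl; first by rewrite lee_fin.
  have [j [Kj jx xj]] := @exists_dyadic _ _ _ Kx.
  apply: (@le_trans _ _ (\sum_(0 <= i < j.+1) u i w)%E); last first.
    exact: nneseries_lim_ge.
  rewrite big_nat_recr //=.
  apply: lee_paddl; first by apply: sume_ge0.
  rewrite /u /a Kj indicE mem_set // mule1 lee_fin.
  by apply: hmono => //; exact: ltW.
have msum : measurable_fun setT (fun w => (\sum_(k <oo) u k w)%E).
  exact: (@ge0_emeasurable_sum _ _ _ setT u predT (fun k x _ _ => u0 k x) (fun k _ => mu k)).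
apply: (@le_trans _ _ (\int[P]_w ((h (2 ^+ K))%:E + \sum_(k <oo) u k w))%E).
  apply: ge0_le_integral => //.
  - by move=> w _; rewrite lee_fin h0.
  - exact/measurable_EFinP.
  - apply: emeasurable_funD => //; exact: measurable_cst.
rewrite ge0_integralD //; last by move=> w _; exact: nneseries_ge0.
rewrite integral_cst //.
rewrite integral_nneseries //.
rewrite EFinD; apply: leeD.
  rewrite -[leRHS]mule1; apply: lee_wpmul2l; first by rewrite lee_fin.
  exact: probability_le1.
apply: (@le_trans _ _ (\sum_(k <oo) (D * r ^+ k)%:E)%E).
  apply: lee_nneseries => [k _ _ | k _].
    by apply: integral_ge0 => w _; exact: u0.
  rewrite /u ge0_integralZl_EFin //; last by apply/measurable_EFinP; exact: measurable_indic.
  rewrite integral_indic // setIT /a.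
  case: ifP => Kk; first exact: hk.
  by rewrite mul0e lee_fin mulr_ge0 // exprn_ge0 // ltW.
apply: lime_le.
  by apply: is_cvg_nneseries => n _ _; rewrite lee_fin mulr_ge0 // exprn_ge0 // ltW.
apply: nearW => n.
rewrite sumEFin lee_fin.
have r1' : `|r| < 1 by rewrite ger0_norm // ltW.
have := @geometric_le_lim R n D r D0 r0 r1'.

by rewrite /series /= => ->.
Qed.
Lemma powRDp {R : realType} (x r s : R) : 0 < x -> x `^ (r + s) = x `^ r * x `^ s.
Proof. by move=> x0; rewrite powRD // (gt_eqF x0) implybT. Qed.

Definition G {R : realType} (n : R) (b m : nat) (y : R) := y ^+ b / (y / n + 1) ^+ m.

Lemma G_le_pow {R : realType} (n y : R) b m : 0 < n -> 0 < y -> G n b m y <= y ^+ b.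
Proof.
move=> n0 y0; rewrite /G.
have d1 : 1 <= (y / n + 1) ^+ m.
  by apply: exprn_ege1; rewrite lerDr divr_ge0 // ltW.
rewrite ler_pdivrMr; last exact: (lt_le_trans ltr01 d1).
by rewrite ler_peMr // exprn_ge0 // ltW.
Qed.

Lemma G_ge0 {R : realType} (n y : R) b m : 0 < n -> 0 < y -> 0 <= G n b m y.
Proof.
move=> n0 y0; rewrite /G divr_ge0 // exprn_ge0 //; first exact: ltW.
by rewrite ltW // ltr_pwDr // divr_ge0 // ltW.
Qed.

Lemma G_mono {R : realType} (n x y : R) b m : 0 < n -> (m <= b)%N -> 0 < x -> x <= y ->
  G n b m x <= G n b m y.
Proof.
move=> n0 mb x0 xy.
have y0 : 0 < y by exact: lt_le_trans xy.
have E z : 0 < z -> G n b m z = z ^+ (b - m) * (z / (z / n + 1)) ^+ m.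
  move=> z0; rewrite /G exprMn exprVn mulrA -exprD subnK //.
rewrite !E //.
have dx : 0 < x / n + 1 by rewrite ltr_pwDr // divr_ge0 // ltW.
have dy : 0 < y / n + 1 by rewrite ltr_pwDr // divr_ge0 // ltW.
apply: ler_pM.
- by rewrite exprn_ge0 // ltW.
- by rewrite exprn_ge0 // divr_ge0 // ltW.
- by apply: lerXn2r => //; rewrite nnegrE ltW.
apply: lerXn2r.
- by rewrite nnegrE divr_ge0 // ltW.
- by rewrite nnegrE divr_ge0 // ltW.
rewrite ler_pdivrMr // mulrAC ler_pdivlMr //.
have : x * (y / n + 1) <= y * (x / n + 1).
  have -> : x * (y / n + 1) = x * y / n + x by ring.
  have -> : y * (x / n + 1) = x * y / n + y by ring.
  by rewrite lerD2l.
by [].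
Qed.

Lemma G_bound {R : realType} (n y s : R) b m : 0 < n -> 0 < y -> (m <= b)%N ->
  (b - m)%:R <= s -> s <= b%:R -> G n b m y <= n `^ (b%:R - s) * y `^ s.
Proof.
move=> n0 y0 mb s1 s2.
have bs0 : 0 <= b%:R - s by rewrite subr_ge0.
have [yn|ny] := leP y n.
  apply: (le_trans (@G_le_pow _ n y b m n0 y0)).
  rewrite -(powR_mulrn _ (ltW y0)) -[X in y `^ X](subrK s) powRDp //.
  apply: ler_wpM2r; first exact: powR_ge0.
  by apply: ge0_ler_powR => //; rewrite nnegrE ltW.
have d0 : 0 < y / n by rewrite divr_gt0.
apply: (@le_trans _ _ (y ^+ b / (y / n) ^+ m)).
  rewrite /G; apply: ler_wpM2l; first by rewrite exprn_ge0 // ltW.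
  rewrite lef_pV2 ?posrE ?exprn_gt0 //; last by rewrite ltr_pwDr // ltW.
  by apply: lerXn2r; rewrite ?nnegrE ?lerDl // ltW // ltr_pwDr // ltW.
have -> : y ^+ b / (y / n) ^+ m = y ^+ (b - m) * n ^+ m.
  rewrite -{1}(subnK mb) exprD exprMn exprVn.
  have ym : y ^+ m != 0 by rewrite expf_neq0 // gt_eqF.
  have nm : n ^+ m != 0 by rewrite expf_neq0 // gt_eqF.
  by rewrite invfM invrK mulrA mulfK.
set t := s - (b - m)%:R.
have t0 : 0 <= t by rewrite subr_ge0.
have -> : y `^ s = y ^+ (b - m) * y `^ t.
  by rewrite -(powR_mulrn _ (ltW y0)) -powRDp // /t addrC subrK.
have -> : n ^+ m = n `^ (b%:R - s) * n `^ t.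
  rewrite -(powR_mulrn _ (ltW n0)) -powRDp // /t natrB //.
  by congr (_ `^ _); ring.
rewrite mulrCA.
apply: ler_wpM2l; first exact: powR_ge0.
apply: ler_wpM2l; first by rewrite exprn_ge0 // ltW.
by apply: ge0_ler_powR => //; rewrite ?nnegrE ?(ltW y0) ?(ltW n0) ?(ltW ny).
Qed.
Lemma powR_exprn {R : realType} (a s : R) k : 0 <= a -> (a ^+ k) `^ s = (a `^ s) ^+ k.
Proof.
move=> a0; rewrite -(powR_mulrn _ (powR_ge0 a s)) -powRrM mulrC powRrM.
by rewrite powR_mulrn.
Qed.

Lemma tail_bound d (T : measurableType d) (R : realType) (P : probability T R)
  (X : T -> R) (mX : measurable_fun setT X) (Xpos : forall w, 0 < X w)
  (q C : R) (K : nat) (C0 : 0 <= C)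
  (tail : forall k, (K <= k)%N ->
     (P [set w | (2 ^+ k <= X w)%R] <= (C * (2 `^ (- q)) ^+ k)%:E)%E)
  (h : R -> R) (mh : measurable_fun setT (fun w => h (X w)))
  (hmono : forall x y, 0 < x -> x <= y -> h x <= h y)
  (h0 : forall x, 0 < x -> 0 <= h x)
  (M s : R) (M0 : 0 <= M) (sq : s < q)
  (hb : forall y, 0 < y -> h y <= M * y `^ s) :
  (\int[P]_w (h (X w))%:E <= (h (2 ^+ K) + M * C * 2 `^ s / (1 - 2 `^ (s - q)))%:E)%E.
Proof.
have two0 : (0:R) < 2 by [].
apply: core => //.
- by rewrite mulr_ge0 // ?mulr_ge0 // powR_ge0.
- rewrite /powR gt_eqF // expR_lt1.
  by rewrite pmulr_llt0 ?subr_lt0 // ln_gt0 // ltr1n.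
move=> k Kk.
apply: (@le_trans _ _ ((h (2 ^+ k.+1))%:E * (C * (2 `^ (- q)) ^+ k)%:E)%E).
  apply: lee_wpmul2l; last exact: tail.
  by rewrite lee_fin h0 // exprn_gt0.
rewrite -EFinM lee_fin.
apply: (@le_trans _ _ (M * (2 ^+ k.+1) `^ s * (C * 2 `^ (- q) ^+ k))).
  apply: ler_wpM2r; first by rewrite mulr_ge0 // exprn_ge0 // powR_ge0.
  by apply: hb; rewrite exprn_gt0.
rewrite powR_exprn // (powRDp 2 s (- q) two0) exprMn exprS.
rewrite le_eqVlt; apply/orP; left; apply/eqP; ring.
Qed.
Lemma aux_inv {R : realType} (t : R) : 0 < t -> (1 - expR (- t))^-1 <= 1 + t^-1.
Proof.
move=> t0; rewrite expRN.
have E1 : 1 + t <= expR t := expR_ge1Dx t.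
set E := expR t in E1 *.
have Em1 : 0 < E - 1 by lra.
have En0 : E != 0 by rewrite gt_eqF //; lra.
have -> : 1 - E^-1 = (E - 1) / E by field.
rewrite invf_div ler_pdivrMr //.
have h : 1 <= (E - 1) / t by rewrite ler_pdivlMr // mul1r; lra.
have -> : (1 + t^-1) * (E - 1) = E - 1 + (E - 1) / t by field; rewrite gt_eqF.
lra.
Qed.

Lemma mGX d (T : measurableType d) (R : realType) (X : T -> R)
  (mX : measurable_fun setT X) (Xpos : forall w, 0 < X w) (n : R) b m :
  0 < n -> measurable_fun setT (fun w => G n b m (X w)).
Proof.
move=> n0.
have -> : (fun w => G n b m (X w)) = (fun y => y ^+ b / (`|y| * n^-1 + 1) ^+ m) \o X.
  by apply: funext => w /=; rewrite /G gtr0_norm.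
apply: measurableT_comp => //; apply: mG.
by rewrite invr_ge0 ltW.
Qed.

Lemma lt_pow2_trunc {R : realType} (x : R) : x < 2 ^+ Num.truncn x.
Proof.
apply: (lt_le_trans (truncnS_gt x)).
rewrite -natrX ler_nat; exact: ltn_expl.
Qed.
Theorem lemma8 (d : measure_display) (T : measurableType d) (R : realType)
  (P : probability T R) (X1 : {RV P >-> R}) (p : nat) (alpha : R) :
  (2 <= p)%N -> 1 < alpha -> alpha <= p%:R + 2 ->
  (forall w, 0 < X1 w) ->
  ('E_P[X1] = 1)%E ->
  (exists C x0 : R, forall x : R, x0 <= x ->
      (P [set w | (x <= X1 w)%R] <= (C * x `^ (- (p%:R + alpha)))%:E)%E) ->
  (exists C : R, exists N : nat, forall n : nat, (N <= n)%N ->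
      (\int[P]_w ((X1 w ^+ (2 * p)) / (X1 w / n%:R + 1) ^+ p.+1)%:E
        <= (C * n%:R `^ (p%:R - alpha + 2))%:E)%E)
  /\
  (exists C : R, exists N : nat, forall n : nat, (N <= n)%N ->
      (\int[P]_w ((X1 w ^+ (2 * p)) / (X1 w / n%:R + 1) ^+ p.+1 * X1 w ^+ 2)%:E
        <= (C * n%:R `^ (p%:R - alpha + 2) * ln n%:R)%:E)%E).
Proof.
move=> hp ha1 ha2 Xpos _ [C [x0 Htail]].
set q := p%:R + alpha.
have mX : measurable_fun setT X1 := measurable_funPT X1.
set K := Num.truncn x0.
have two0 : (0:R) < 2 by [].
have tail : forall k, (K <= k)%N ->
    (P [set w | (2 ^+ k <= X1 w)%R] <= (C * (2 `^ (- q)) ^+ k)%:E)%E.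
  move=> k Kk; rewrite -powR_exprn //; apply: Htail.
  apply: ltW; apply: (lt_le_trans (lt_pow2_trunc x0)).
  by rewrite ler_eXn2l // ltr1n.
have C0 : 0 <= C.
  have := tail K (leqnn K).
  move=> /(le_trans (measure_ge0 P _)); rewrite lee_fin.
  by rewrite pmulr_lge0 // exprn_gt0 // powR_gt0.
set e := p%:R - alpha + 2.
have e0 : 0 <= e by rewrite /e; lra.
have p1 : (1 <= p%:R :> R) by rewrite ler1n; apply: leq_trans hp.
split.
  set s := q - 2.
  pose Cst := (2 ^+ K) ^+ (2 * p) + C * 2 `^ s / (1 - 2 `^ (s - q)).
  exists Cst, 1%N => n n1.
  have n0 : (0:R) < n%:R by rewrite ltr0n.
  have mb : (p.+1 <= 2 * p)%N by rewrite mul2n -addnn -addn1 leq_add2l (leq_trans _ hp).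
  have sq : s < q by rewrite /s; lra.
  have hb : forall y, 0 < y -> G n%:R (2 * p) p.+1 y <= n%:R `^ e * y `^ s.
    move=> y y0.
    have -> : e = (2 * p)%:R - s by rewrite /e /s /q natrM; lra.
    apply: G_bound => //.
      by rewrite natrB // natrM /s /q; lra.
    by rewrite natrM /s /q; lra.
  have H := @tail_bound d T R P X1 mX Xpos q C K C0 tail (G n%:R (2 * p) p.+1)
    (@mGX d T R X1 mX Xpos n%:R (2 * p) p.+1 n0) (fun x y x0 xy => @G_mono R n%:R x y (2 * p) p.+1 n0 mb x0 xy)
    (fun x x0 => @G_ge0 R n%:R x (2 * p) p.+1 n0 x0) (n%:R `^ e) s (powR_ge0 _ _) sq hb.
  apply: le_trans H _.
  rewrite lee_fin.
  have E1 : 1 <= n%:R `^ e.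
    have n1' : (1:R) <= n%:R by rewrite ler1n.
    by have := @ler_powR R n%:R n1' 0 e e0; rewrite powRr0.
  rewrite /Cst mulrDl; apply: lerD.
    apply: (le_trans (@G_le_pow R n%:R (2 ^+ K) (2 * p) p.+1 n0 (exprn_gt0 _ two0))).
    by rewrite ler_peMr // exprn_ge0 // exprn_ge0.
  rewrite le_eqVlt; apply/orP; left; apply/eqP; ring.
have mb : (p.+1 <= 2 * p + 2)%N.
  rewrite (leq_trans _ (leq_addr _ _)) //.
  by rewrite mul2n -addnn -addn1 leq_add2l (leq_trans _ hp).
have l2 : 0 < ln (2:R) by rewrite ln_gt0 // ltr1n.
have am1 : 0 < alpha - 1 by lra.
set N2 := maxn 2 (Num.truncn (expR ((alpha - 1)^-1))).+1.
pose Z2 := (2 ^+ K) ^+ (2 * p + 2) : R.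
pose Cst2 := Z2 / ln 2 + 2 * expR 1 * C * 2 `^ q / ln 2.
exists Cst2, N2 => n nN.
have n2 : (2 <= n)%N by apply: leq_trans nN; exact: leq_maxl.
have n0 : (0:R) < n%:R by rewrite ltr0n (leq_trans _ n2).
have L2 : ln (2:R) <= ln n%:R by rewrite ler_ln ?posrE // ?ler_nat // ltr0n.
have L0 : 0 < ln (n%:R : R) by exact: lt_le_trans L2.
have La : (alpha - 1)^-1 < ln (n%:R : R).
  rewrite -ltr_expR lnK ?posrE //.
  apply: (lt_le_trans (truncnS_gt _)); rewrite ler_nat.
  by apply: leq_trans nN; exact: leq_maxr.
set eps := (ln (n%:R : R))^-1.
have eps0 : 0 < eps by rewrite /eps invr_gt0.
have epsa : eps <= alpha - 1.
  rewrite /eps -[leRHS]invrK lef_pV2 ?posrE ?invr_gt0 //; exact: ltW.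
set s := q - eps.
have sq : s < q by rewrite /s; lra.
have hb : forall y, 0 < y -> G n%:R (2 * p + 2) p.+1 y <= n%:R `^ (e + eps) * y `^ s.
  move=> y y0.
  have -> : e + eps = (2 * p + 2)%:R - s by rewrite /e /s /q natrD natrM; lra.
  apply: G_bound => //.
    by rewrite natrB // natrD natrM /s /q; lra.
  by rewrite natrD natrM /s /q; lra.
have H := @tail_bound d T R P X1 mX Xpos q C K C0 tail (G n%:R (2 * p + 2) p.+1)
  (@mGX d T R X1 mX Xpos n%:R (2 * p + 2) p.+1 n0)
  (fun x y x0 xy => @G_mono R n%:R x y (2 * p + 2) p.+1 n0 mb x0 xy)
  (fun x x0 => @G_ge0 R n%:R x (2 * p + 2) p.+1 n0 x0) (n%:R `^ (e + eps)) s (powR_ge0 _ _) sq hb.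
have eqh : forall w, X1 w ^+ (2 * p) / (X1 w / n%:R + 1) ^+ p.+1 * X1 w ^+ 2
    = G n%:R (2 * p + 2) p.+1 (X1 w).
  by move=> w; rewrite /G mulrAC -exprD.
rewrite (eq_integral (fun w => (G n%:R (2 * p + 2) p.+1 (X1 w))%:E)); last first.
  by move=> w _; rewrite eqh.
apply: le_trans H _.
rewrite lee_fin.
have E1 : 1 <= n%:R `^ e.
  have n1' : (1:R) <= n%:R by rewrite ler1n (leq_trans _ n2).
  by have := @ler_powR R n%:R n1' 0 e e0; rewrite powRr0.
have Meq : n%:R `^ (e + eps) = n%:R `^ e * expR 1.
  rewrite powRDp //; congr (_ * _).
  by rewrite /powR (gt_eqF n0) /eps mulVf // gt_eqF.
have SQ : 2 `^ s <= 2 `^ q by apply: ler_powR; [rewrite ler1n | exact: ltW].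
set t := eps * ln 2.
have t0 : 0 < t by rewrite /t mulr_gt0.
have req : 2 `^ (s - q) = expR (- t).
  rewrite /powR (gt_eqF two0); congr expR; rewrite /t /s; ring.
have It : (1 - 2 `^ (s - q))^-1 <= 2 * ln (n%:R : R) / ln 2.
  rewrite req.
  apply: le_trans; first exact: (@aux_inv R t t0).
  have -> : t^-1 = ln (n%:R : R) / ln 2 by rewrite /t invfM /eps invrK.
  have : 1 <= ln (n%:R : R) / ln 2 by rewrite ler_pdivlMr // mul1r.
  lra.
have I0 : 0 <= (1 - 2 `^ (s - q))^-1.
  rewrite invr_ge0 req subr_ge0 -expR0 ler_expR; lra.
have hK : G n%:R (2 * p + 2) p.+1 (2 ^+ K) <= Z2.
  exact: (@G_le_pow R n%:R (2 ^+ K) (2 * p + 2) p.+1 n0 (exprn_gt0 _ two0)).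
have Z0 : 0 <= Z2 by rewrite /Z2 exprn_ge0 // exprn_ge0.
have LL : 1 <= ln (n%:R : R) / ln 2 by rewrite ler_pdivlMr // mul1r.
have ELl : 1 <= n%:R `^ e * (ln (n%:R : R) / ln 2).
  by have := ler_pM ler01 ler01 E1 LL; rewrite mul1r.
have -> : Cst2 * n%:R `^ e * ln (n%:R : R) =
    Z2 * (n%:R `^ e * (ln (n%:R : R) / ln 2)) +
    (expR 1 * C * n%:R `^ e) * (2 `^ q * (2 * ln (n%:R : R) / ln 2)).
  by rewrite /Cst2; ring.
rewrite Meq; apply: lerD.
  by apply: (le_trans hK); rewrite ler_peMr.
have -> : n%:R `^ e * expR 1 * C * 2 `^ s / (1 - 2 `^ (s - q)) =
    (expR 1 * C * n%:R `^ e) * (2 `^ s * (1 - 2 `^ (s - q))^-1) by ring.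
apply: ler_wpM2l.
  by rewrite mulr_ge0 ?mulr_ge0 // ?expR_ge0 ?powR_ge0.
apply: ler_pM => //; exact: powR_ge0.
Qed.
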